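(* Let $m,n$ be positive integers with $n\ge 2$, let $\Pi$ be a regular $(nm+2)$-gon, and let $\Gamma^m_{A_{n-1}}$ and $\tau_m$ be the quiver of $m$-diagonals of $\Pi$ and the rotation map described in the context. Then $(\Gamma^m_{A_{n-1}},\tau_m)$ is a connected stable translation quiver, i.e. it is not a disjoint union of two non-empty stable translation subquivers.
   Context: The vertices of $\Pi$ are labelled $1,\dots,nm+2$ clockwise, and vertex labels are taken modulo $nm+2$. A diagonal with endpoints $i,j$ is written $(i,j)=(j,i)$. An $m$-diagonal is a diagonal of $\Pi$ that divides $\Pi$ into an $(mj+2)$-gon and an $(m(n-j)+2)$-gon for some integer $1\le j\le n-1$. The quiver $\Gamma^m_{A_{n-1}}$ has as vertices the $m$-diagonals of $\Pi$. There is an arrow $D\to D'$ (and at most one) exactly when $D$ and $D'$ share an endpoint $i$, with other endpoints $j$ and $j'$ respectively, such that $D$, $D'$ and the boundary arc from $j$ to $j'$ not containing $i$ bound an $(m+2)$-gon, and $D$ is rotated onto the line through $D'$ by a clockwise rotation about $i$. Equivalently, $D=(i,j)$ and $D'=(i,j+m)$ are both $m$-diagonals. The map $\tau_m$ sends an $m$-diagonal to its image under the anticlockwise rotation of $\Pi$ about its centre through $2m\pi/(nm+2)$, that is $(i,j)\mapsto(i-m,j-m)$. A translation quiver is a pair $(\Gamma,\tau)$ with the following properties: $\Gamma$ is a locally finite quiver with vertex set $\Gamma_0$; $\tau:\Gamma_0'\to\Gamma_0$ is an injective map defined on a subset $\Gamma_0'\subseteq\Gamma_0$; and for all $X\in\Gamma_0$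 and $Y\in\Gamma_0'$ the number of arrows $X\to Y$ equals the number of arrows $\tau(Y)\to X$. The translation quiver is stable if $\Gamma_0'=\Gamma_0$ and $\tau$ is bijective. *)

(* Defs.v *)
From HB Require Import structures.
From mathcomp Require Import all_boot all_order all_algebra.
Set Implicit Arguments. Unset Strict Implicit. Unset Printing Implicit Defensive.
Import GRing.Theory.
Local Open Scope ring_scope.

(* A finite quiver on the finType V is given by its arrow multiplicities
   narr X Y = number of arrows X -> Y (a finite quiver is locally finite). *)
Definition stable_translation_quiver (V : finType) (narr : V -> V -> nat)
  (tau : V -> V) : Prop :=
  bijective tau /\ (forall X Y : V, narr X Y = narr (tau Y) X).

(* (V, narr, tau) is the disjoint union of two non-empty stable translation
   subquivers, with vertex sets A and ~: A: no arrows between A and its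
   complement, and tau restricts to a bijection of A (and of ~: A). *)
Definition disjoint_union_stq (V : finType) (narr : V -> V -> nat)
  (tau : V -> V) : Prop :=
  exists A : {set V},
    [/\ A != set0, ~: A != set0,
        (forall x, (tau x \in A) = (x \in A)) &
        (forall x y, narr x y != 0%N -> (x \in A) = (y \in A))].

Definition connected_stq (V : finType) (narr : V -> V -> nat) (tau : V -> V)
  : Prop := ~ disjoint_union_stq narr tau.

(* Vertices are labelled 0, ..., n*m+1 clockwise (labels modulo n*m+2), i.e.
   by 'I_(n*m).+2, with its Z/(nm+2)Z additive structure. *)

Definition cw (p : nat) (i j : 'I_p.+1) : nat := nat_of_ord (j - i).

(* (i,j) is an m-diagonal: going clockwise from i to j, the boundary arc
   together with the diagonal bounds an (m k + 2)-gon, 1 <= k <= n-1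
   (the other side is then an (m(n-k)+2)-gon). *)
Definition is_mdiag (n m : nat) (i j : 'I_(n * m).+2) : bool :=
  [exists k : 'I_n, (0 < (k : nat))%N && (cw i j == m * k + 1)%N].

Definition mdiagb (n m : nat) (D : {set 'I_(n * m).+2}) : bool :=
  [exists i, exists j, (D == [set i; j]) && @is_mdiag n m i j].

Definition mdiag (n m : nat) := {D : {set 'I_(n * m).+2} | @mdiagb n m D}.

Definition Gamma_arr (n m : nat) (D D' : mdiag n m) : nat :=
  nat_of_bool [exists i, exists j,
    (val D == [set i; j]) && (val D' == [set i; j + inZp m])].

Definition rotD (n m : nat) (D : {set 'I_(n * m).+2}) : {set 'I_(n * m).+2} :=
  [set x - inZp m | x in D].

Lemma cw_rot (p : nat) (a i j : 'I_p.+1) : cw (i - a) (j - a) = cw i j.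
Proof. by rewrite /cw opprB addrA subrK. Qed.

Lemma mdiagb_rot (n m : nat) (D : {set 'I_(n * m).+2}) :
  @mdiagb n m D -> @mdiagb n m (@rotD n m D).
Proof.
case/existsP=> i /existsP [j /andP [/eqP -> H]].
apply/existsP; exists (i - inZp m); apply/existsP; exists (j - inZp m).
rewrite /rotD imsetU1 imset_set1 eqxx /=.
by move: H; rewrite /is_mdiag cw_rot.
Qed.

Definition tau_m (n m : nat) (D : mdiag n m) : mdiag n m :=
  exist _ (@rotD n m (val D)) (mdiagb_rot (valP D)).

(* Main.v *)
Require Import Defs.
From mathcomp Require Import all_boot all_order all_algebra.
From mathcomp Require Import ring zify.
Import GRing.Theory.

Section Proof.
Variables n m : nat.
Local Notation V := 'I_(n * m).+2.
Local Notation MD := (mdiag n m).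
Local Open Scope ring_scope.

Definition Sd (i : V) (k : nat) : {set V} := [set i; i + (m * k + 1)%N%:R].

Lemma S_md i k : (0 < k < n)%N -> @mdiagb n m (Sd i k).
Proof.
case/andP=> k0 kn; apply/existsP; exists i; apply/existsP.
exists (i + (m * k + 1)%N%:R); rewrite eqxx /=; apply/existsP.
exists (Ordinal kn); rewrite /= k0 /cw addrAC subrr add0r Zp_nat /= modn_small //.
have : (m * k <= m * n)%N by rewrite leq_mul2l ltnW ?orbT.
rewrite mulnC; lia.
Qed.

Definition Dm i k (h : (0 < k < n)%N) : MD := exist _ (Sd i k) (S_md i k h).

Lemma all_Dm (D : MD) : exists i k (h : (0 < k < n)%N), D = Dm i k h.
Proof.
case: D => S0 HS.
case/existsP: (HS) => i /existsP[j /andP[/eqP E /existsP[k /andP[k0 /eqP cwE]]]].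
have hk : (0 < k < n)%N by rewrite k0 ltn_ord.
exists i, k, hk; apply: val_inj => /=; rewrite E /Sd.
have H : j - i = (m * k + 1)%N%:R.
  by apply: val_inj; rewrite Zp_nat /= -cwE /cw modZp.
by rewrite -H addrC subrK.
Qed.

Lemma arr_up i k h h' : Gamma_arr (Dm i k h) (Dm i k.+1 h') != 0%N.
Proof.
rewrite /Gamma_arr; suff -> : [exists i0, exists j,
    (val (Dm i k h) == [set i0; j]) && (val (Dm i k.+1 h') == [set i0; j + inZp m])] by [].
apply/existsP; exists i; apply/existsP; exists (i + (m * k + 1)%N%:R).
rewrite /= eqxx /= -Zp_nat /Sd; apply/eqP; congr [set i; _]; ring.
Qed.

Lemma natN : ((n * m).+2)%:R = 0 :> V.
Proof. by apply: val_inj; rewrite Zp_nat /= modnn. Qed.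

Lemma ident i k h h' : Dm i k h = Dm (i + (m * k + 1)%N%:R) (n - k) h'.
Proof.
apply: val_inj; rewrite /= /Sd.
have E : i + (m * k + 1)%N%:R + (m * (n - k) + 1)%N%:R = i.
  rewrite -addrA -natrD.
  have -> : (m * k + 1 + (m * (n - k) + 1) = (n * m).+2)%N.
    case/andP: h => _ kn.
    have : (m * k <= m * n)%N by rewrite leq_mul2l ltnW ?orbT.
    rewrite mulnBr mulnC; lia.
  by rewrite natN addr0.
by rewrite E; apply/setP => x; rewrite !inE orbC.
Qed.

Lemma tauDm i h : tau_m (Dm i 1 h) = Dm (i - m%:R) 1 h.
Proof.
apply: val_inj; rewrite /= /Sd; unfold Defs.rotD; rewrite imsetU1 imset_set1 -Zp_nat.
congr [set _; _]; ring.
Qed.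

Lemma connected_main (A : {set MD}) :
  (1 < n)%N ->
  (forall x, (tau_m x \in A) = (x \in A)) ->
  (forall x y, Gamma_arr x y != 0%N -> (x \in A) = (y \in A)) ->
  forall h1 : (0 < 1 < n)%N, forall D, (D \in A) = (Dm 0 1 h1 \in A).
Proof.
move=> n1 Htau Harr h1.
have step1 : forall i k (h : (0 < k < n)%N), (Dm i k h \in A) = (Dm i 1 h1 \in A).
  move=> i; elim=> [|k IH] h; first by exfalso; move: h.
  case: k IH h => [|k] IH h.
    by congr (_ \in A); apply: val_inj.
  have hk : (0 < k.+1 < n)%N by move: h; lia.
  by rewrite -(Harr _ _ (arr_up i k.+1 hk h)) IH.
have hn1 : (0 < n - 1 < n)%N by apply/andP; split; lia.
have step2 : forall i, (Dm (i + 1) 1 h1 \in A) = (Dm i 1 h1 \in A).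
  move=> i; have -> : Dm (i + 1) 1 h1 = tau_m (Dm (i + (m * 1 + 1)%N%:R) 1 h1).
    by rewrite tauDm; apply: val_inj; rewrite /= /Sd; congr [set _; _ + _]; ring.
  by rewrite Htau (ident i 1 h1 hn1) [RHS]step1.
have step3 : forall t : nat, (Dm t%:R 1 h1 \in A) = (Dm 0 1 h1 \in A).
  elim=> [|t IH]; first by rewrite mulr0n.
  by rewrite mulrSr step2 IH.
move=> D; have [i [k [h ->]]] := all_Dm D.
by rewrite step1 -(natr_Zp i) step3.
Qed.

Lemma rotD_inj : injective (@Defs.rotD n m).
Proof.
apply: imset_inj => a b H.
by rewrite -(subrK (inZp m) a) H subrK.
Qed.

End Proof.

Theorem proposition2p3 (m n : nat) (hm : (0 < m)%N) (hn : (2 <= n)%N) :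
  stable_translation_quiver (@Gamma_arr n m) (@tau_m n m) /\
  connected_stq (@Gamma_arr n m) (@tau_m n m).
Proof.
split.
  split.
    apply: injF_bij => x y /(congr1 val) /= /(@rotD_inj n m) H.
    exact: val_inj.
  move=> X Y; rewrite /Gamma_arr; congr nat_of_bool.
  apply/idP/idP.
    case/existsP=> i /existsP[j /andP[/eqP EX /eqP EY]].
    apply/existsP; exists j; apply/existsP; exists (i - inZp m)%R.
    rewrite /= EY; unfold Defs.rotD; rewrite imsetU1 imset_set1 addrK EX subrK.
    by rewrite setUC eqxx /= setUC.
  case/existsP=> a /existsP[b /andP[/eqP ET /eqP EX]].
  apply/existsP; exists (b + inZp m)%R; apply/existsP; exists a.
  rewrite EX setUC eqxx /=.
  have : @Defs.rotD n m (val Y) = @Defs.rotD n m [set a + inZp m; b + inZp m]%R.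
    transitivity [set a; b]; first exact: ET.
    by unfold Defs.rotD; rewrite imsetU1 imset_set1 !addrK.
  by move/(@rotD_inj n m) => ->; rewrite setUC.
case=> A [A0 CA0 Htau Harr].
have h1 : (0 < 1 < n)%N by rewrite hn.
have K := @connected_main n m A hn Htau Harr h1.
case/set0Pn: A0 => x xA; case/set0Pn: CA0 => y.
by rewrite inE (K y) -(K x) xA.
Qed.
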